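(* For every $(w_1,w_2)\in\mathcal A$, with $c_i=c_i(w_1,w_2)$, $$e^{c_i}\int_\Omega e^{u_i^0+w_i}\,dx\le|\Omega|\quad\text{and}\quad e^{c_i}\le1,\qquad i=1,2.$$
   Context: Standing setting (doubly periodic case): $N\ge2$ integer, $\kappa>1$, $\lambda>0$; $\Omega$ a doubly periodic domain (flat torus) of area $|\Omega|$; integers $n_1,n_2\ge0$ and points $p_{is}\in\Omega$. $\dot W^{1,2}(\Omega)=\{w\in W^{1,2}(\Omega):\int_\Omega w=0\}$ (periodic functions). $u_i^0$ solves $\Delta u_i^0=4\pi\sum_{s=1}^{n_i}\delta_{p_{is}}-\frac{4\pi n_i}{|\Omega|}$, $\int_\Omega u_i^0=0$. $b_1=\frac{4\pi((1+(N-1)\kappa)n_1+(\kappa-1)n_2)}{\kappa}$, $b_2=\frac{4\pi((N-1)(\kappa-1)n_1+(N-1+\kappa)n_2)}{(N-1)\kappa}$. $\mathcal A$ is the set of $(w_1,w_2)\in\dot W^{1,2}(\Omega)^2$ with $(\int_\Omega e^{u_1^0+w_1})^2\ge\frac{4(N-1+\kappa)b_1}{N^2\lambda}\int_\Omega e^{2u_1^0+2w_1}$ and $(\int_\Omega e^{u_2^0+w_2})^2\ge\frac{4(N-1)(1+(N-1)\kappa)b_2}{N^2\lambda}\int_\Omega e^{2u_2^0+2w_2}$. For $(w_1,w_2)\in\mathcal A$, $(c_1(w_1,w_2),c_2(w_1,w_2))$ is the unique pair of reals such that $e^{c_1}=f_1(e^{c_2})$, $e^{c_2}=f_2(e^{c_1})$,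 where with $E_{12}=\int_\Omega e^{u_1^0+u_2^0+w_1+w_2}$, $P_1(Y)=N\int_\Omega e^{u_1^0+w_1}+(\kappa-1)YE_{12}$, $P_2(X)=\frac N{N-1}\int_\Omega e^{u_2^0+w_2}+(\kappa-1)XE_{12}$, $f_1(Y)=\frac{P_1(Y)+\sqrt{P_1(Y)^2-\frac{4(N-1+\kappa)b_1}{\lambda}\int e^{2u_1^0+2w_1}}}{2(N-1+\kappa)\int e^{2u_1^0+2w_1}}$, $f_2(X)=\frac{P_2(X)+\sqrt{P_2(X)^2-\frac{4(1+(N-1)\kappa)b_2}{(N-1)\lambda}\int e^{2u_2^0+2w_2}}}{2(\frac1{N-1}+\kappa)\int e^{2u_2^0+2w_2}}$ (this pair exists and is unique). *)

(* Defs.v *)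
From HB Require Import structures.
From mathcomp Require Import all_boot all_order all_algebra.
From mathcomp Require Import all_classical all_reals all_analysis.
Set Implicit Arguments. Unset Strict Implicit. Unset Printing Implicit Defensive.
Import Order.TTheory GRing.Theory Num.Theory.
Import numFieldNormedType.Exports.
Local Open Scope classical_set_scope.
Local Open Scope ring_scope.

Section Torus.
Variable R : realType.

Definition pt := (R * R)%type.

Definition leb2 := ((@lebesgue_measure R) \x (@lebesgue_measure R))%E.

Definition e1 : pt := (1, 0).
Definition e2 : pt := (0, 1).

Definition lattice_basis (om1 om2 : pt) : Prop :=
  om1.1 * om2.2 - om1.2 * om2.1 != 0.

(* Fundamental parallelogram of the lattice: the torus Omega. *)
Definition fdom (om1 om2 : pt) : set pt :=
  [set x | exists s t : R, [/\ 0 <= s < 1, 0 <= t < 1 &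
            x = (s * om1.1 + t * om2.1, s * om1.2 + t * om2.2)]].

Definition area (om1 om2 : pt) : R := fine (leb2 (fdom om1 om2)).

Definition intO (om1 om2 : pt) (f : pt -> R) : R :=
  Rintegral leb2 (fdom om1 om2) f.

Definition periodic (om1 om2 : pt) (f : pt -> R) : Prop :=
  forall x, f (x + om1) = f x /\ f (x + om2) = f x.

Fixpoint iter_dir (vs : seq pt) (f : pt -> R) : pt -> R :=
  match vs with
  | [::] => f
  | v :: vs' => 'D_v (iter_dir vs' f)
  end.

Definition smooth (f : pt -> R) : Prop :=
  forall (vs : seq pt) (x : pt), differentiable (iter_dir vs f) x.

Definition test_fun (om1 om2 : pt) (phi : pt -> R) : Prop :=
  smooth phi /\ periodic om1 om2 phi.

Definition laplacian (phi : pt -> R) : pt -> R :=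
  fun x => 'D_e1 ('D_e1 phi) x + 'D_e2 ('D_e2 phi) x.

Definition L2O (om1 om2 : pt) (g : pt -> R) : Prop :=
  periodic om1 om2 g /\ measurable_fun (fdom om1 om2) g /\
  leb2.-integrable (fdom om1 om2) (fun x => (g x ^+ 2)%:E).

Definition W12 (om1 om2 : pt) (w : pt -> R) : Prop :=
  L2O om1 om2 w /\
  exists g1 g2 : pt -> R, L2O om1 om2 g1 /\ L2O om1 om2 g2 /\
    forall phi, test_fun om1 om2 phi ->
      intO om1 om2 (fun x => w x * 'D_e1 phi x) = - intO om1 om2 (fun x => g1 x * phi x) /\
      intO om1 om2 (fun x => w x * 'D_e2 phi x) = - intO om1 om2 (fun x => g2 x * phi x).

Definition W12dot (om1 om2 : pt) (w : pt -> R) : Prop :=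
  W12 om1 om2 w /\ intO om1 om2 w = 0.

(* u is the (mean zero) distributional solution of
   Delta u = 4 pi sum_{s<n} delta_{p s} - 4 pi n / |Omega| on the torus. *)
Definition is_u0 (om1 om2 : pt) (n : nat) (p : 'I_n -> pt) (u : pt -> R) : Prop :=
  periodic om1 om2 u /\ measurable_fun (fdom om1 om2) u /\
  leb2.-integrable (fdom om1 om2) (fun x => (u x)%:E) /\
  intO om1 om2 u = 0 /\
  forall phi, test_fun om1 om2 phi ->
    intO om1 om2 (fun x => u x * laplacian phi x) =
      4 * pi * (\sum_(s < n) phi (p s))
      - 4 * pi * n%:R / area om1 om2 * intO om1 om2 phi.

Definition b1 (N : nat) (kappa : R) (n1 n2 : nat) : R :=
  4 * pi * ((1 + (N%:R - 1) * kappa) * n1%:R + (kappa - 1) * n2%:R) / kappa.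

Definition b2 (N : nat) (kappa : R) (n1 n2 : nat) : R :=
  4 * pi * ((N%:R - 1) * (kappa - 1) * n1%:R + (N%:R - 1 + kappa) * n2%:R)
    / ((N%:R - 1) * kappa).

Section Data.
Variables (N : nat) (kappa lambda : R) (om1 om2 : pt) (n1 n2 : nat)
          (u10 u20 w1 w2 : pt -> R).

Definition I1 := intO om1 om2 (fun x => expR (u10 x + w1 x)).
Definition I2 := intO om1 om2 (fun x => expR (u20 x + w2 x)).
Definition J1 := intO om1 om2 (fun x => expR (2 * u10 x + 2 * w1 x)).
Definition J2 := intO om1 om2 (fun x => expR (2 * u20 x + 2 * w2 x)).
Definition E12 := intO om1 om2 (fun x => expR (u10 x + u20 x + w1 x + w2 x)).

Definition in_A : Prop :=
  W12dot om1 om2 w1 /\ W12dot om1 om2 w2 /\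
  I1 ^+ 2 >= 4 * (N%:R - 1 + kappa) * b1 N kappa n1 n2 / (N%:R ^+ 2 * lambda) * J1 /\
  I2 ^+ 2 >= 4 * (N%:R - 1) * (1 + (N%:R - 1) * kappa) * b2 N kappa n1 n2
               / (N%:R ^+ 2 * lambda) * J2.

Definition P1 (Y : R) : R := N%:R * I1 + (kappa - 1) * Y * E12.
Definition P2 (X : R) : R := N%:R / (N%:R - 1) * I2 + (kappa - 1) * X * E12.

Definition f1 (Y : R) : R :=
  (P1 Y + Num.sqrt (P1 Y ^+ 2 - 4 * (N%:R - 1 + kappa) * b1 N kappa n1 n2 / lambda * J1))
  / (2 * (N%:R - 1 + kappa) * J1).

Definition f2 (X : R) : R :=
  (P2 X + Num.sqrt (P2 X ^+ 2 - 4 * (1 + (N%:R - 1) * kappa) * b2 N kappa n1 n2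
                                   / ((N%:R - 1) * lambda) * J2))
  / (2 * ((N%:R - 1)^-1 + kappa) * J2).

Definition is_c (c1 c2 : R) : Prop :=
  expR c1 = f1 (expR c2) /\ expR c2 = f2 (expR c1).

End Data.
End Torus.

(* Main.v *)
Require Import Defs.
From HB Require Import structures.
From mathcomp Require Import all_boot all_order all_algebra.
From mathcomp Require Import all_classical all_reals all_analysis.
From mathcomp Require Import measurable_realfun ring lra.
Import Order.TTheory GRing.Theory Num.Theory.
Import numFieldNormedType.Exports.
Local Open Scope classical_set_scope.
Local Open Scope ring_scope.

Section S.
Variable R : realType.

Lemma fdom_meas (om1 om2 : pt R) : lattice_basis om1 om2 -> measurable (fdom om1 om2).
Proof.
rewrite /lattice_basis => d0.
set d := om1.1 * om2.2 - om1.2 * om2.1.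
pose S := fun x : pt R => (x.1 * om2.2 - x.2 * om2.1) / d.
pose T := fun x : pt R => (om1.1 * x.2 - om1.2 * x.1) / d.
have -> : fdom om1 om2 = S @^-1` `[0, 1[ `&` T @^-1` `[0, 1[.
  apply/seteqP; split => x /=.
  - move=> [s [t [hs ht ->]]]; rewrite /S /T /= !in_itv /=.
    have -> : ((s * om1.1 + t * om2.1) * om2.2 - (s * om1.2 + t * om2.2) * om2.1) / d = s.
      by rewrite /d; field.
    have -> : (om1.1 * (s * om1.2 + t * om2.2) - om1.2 * (s * om1.1 + t * om2.1)) / d = t.
      by rewrite /d; field.
    by split.
  - rewrite /S /T /= !in_itv /= => [[hs ht]].
    exists ((x.1 * om2.2 - x.2 * om2.1) / d), ((om1.1 * x.2 - om1.2 * x.1) / d); split => //.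
    case: x {hs ht} => a b /=; congr pair; rewrite /d; field; exact: d0.
have mS : measurable_fun setT S.
  apply: measurable_funM; last exact: measurable_cst.
  apply: measurable_funB; apply: measurable_funM; first exact: measurable_fst.
  exact: measurable_cst. exact: measurable_snd. exact: measurable_cst.
have mT : measurable_fun setT T.
  apply: measurable_funM; last exact: measurable_cst.
  apply: measurable_funB; apply: measurable_funM; first exact: measurable_cst.
  exact: measurable_snd. exact: measurable_cst. exact: measurable_fst.
have h1 : measurable (S @^-1` `[0, 1[).
  by rewrite -[X in measurable X]setTI; apply: mS => //; exact: measurable_itv.
have h2 : measurable (T @^-1` `[0, 1[).
  by rewrite -[X in measurable X]setTI; apply: mT => //; exact: measurable_itv.
exact: measurableI h1 h2.
Qed.


Definition mT := (measurableTypeR R * measurableTypeR R)%type.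

Lemma fdom_measL (om1 om2 : pt R) : lattice_basis om1 om2 ->
  measurable (fdom om1 om2 : set mT).
Proof. move=> hb. exact: (@fdom_meas om1 om2 hb). Qed.

Lemma mconv (D : set (pt R)) (f : pt R -> R) : measurable_fun D f ->
  measurable_fun (D : set mT) (f : mT -> measurableTypeR R).
Proof. move=> h; exact: h. Qed.

Lemma fdom_fin (om1 om2 : pt R) : lattice_basis om1 om2 ->
  (@leb2 R (fdom om1 om2) < +oo)%E.
Proof.
move=> hb.
set M := `|om1.1| + `|om2.1| + `|om1.2| + `|om2.2|.
have sub : (fdom om1 om2 : set mT) `<=` `[- M, M] `*` `[- M, M].
  move=> x [s [t [/andP[s0 s1] /andP[t0 t1] ->]]]; rewrite /= !in_itv /= -!ler_norml.
  have hs : `|s| <= 1 by rewrite ger0_norm // ltW.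
  have ht : `|t| <= 1 by rewrite ger0_norm // ltW.
  split.
  - apply: (le_trans (ler_normD _ _)); rewrite !normrM /M.
    have := ler_wpM2r (normr_ge0 om1.1) hs; have := ler_wpM2r (normr_ge0 om2.1) ht.
    have := normr_ge0 om1.2; have := normr_ge0 om2.2. lra.
  - apply: (le_trans (ler_normD _ _)); rewrite !normrM /M.
    have := ler_wpM2r (normr_ge0 om1.2) hs; have := ler_wpM2r (normr_ge0 om2.2) ht.
    have := normr_ge0 om1.1; have := normr_ge0 om2.1. lra.
have mB : measurable (`[- M, M] `*` `[- M, M] : set mT).
  by apply: measurableX; exact: measurable_itv.
apply: (le_lt_trans (le_measure _ _ _ sub)).
- by rewrite inE; exact: fdom_measL.
- by rewrite inE.
have E := @product_measure1E _ _ _ _ R (@lebesgue_measure R) (@lebesgue_measure R) _ _ (measurable_itv `[- M, M]) (measurable_itv `[- M, M]).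
rewrite /leb2 /=; rewrite /= in E; rewrite E.
by rewrite !lebesgue_measure_itv /=; case: ifP => _; rewrite ?mul0e ?ltry // -EFinM ltry.
Qed.

End S.

Section A.
Variable R : realType.

Lemma cs_lemma (A I J : R) : 0 <= A -> 0 <= I -> 0 < J ->
  (forall m, 0 <= J - 2 * m * I + m ^+ 2 * A) -> I <= Num.sqrt A * Num.sqrt J.
Proof.
move=> A0 I0 J0 h.
have [Ap|Az] := ltP 0 A; last first.
  have AE : A = 0 by apply/eqP; rewrite eq_le Az A0.
  have [Ip|Iz] := ltP 0 I; last by rewrite AE sqrtr0 mul0r.
  have := h (J / I); rewrite AE mulr0 addr0.
  have -> : 2 * (J / I) * I = 2 * J by field; rewrite gt_eqF.
  lra.
set a := Num.sqrt A; set j := Num.sqrt J.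
have ap : 0 < a by rewrite sqrtr_gt0.
have jp : 0 < j by rewrite sqrtr_gt0.
have AE : A = a ^+ 2 by rewrite sqr_sqrtr // ltW.
have JE : J = j ^+ 2 by rewrite sqr_sqrtr // ltW.
set q := j / a.
have qp : 0 < q by rewrite divr_gt0.
have qa : q * a = j by rewrite /q mulfVK ?gt_eqF.
have := h q; rewrite AE JE -qa => H.
have : q * I <= q * (a * (q * a)) by nra.
by rewrite ler_pM2l // qa.
Qed.

Lemma quad_root (a J P c X : R) : 0 < a -> 0 < J -> 0 <= P -> 0 <= c ->
  X = (P + Num.sqrt (P ^+ 2 - c)) / (2 * a * J) -> a * J * X <= P.
Proof.
move=> a0 J0 P0 c0 ->.
have hs : Num.sqrt (P ^+ 2 - c) <= P.
  apply: (@le_trans _ _ (Num.sqrt (P ^+ 2))); last by rewrite sqrtr_sqr ger0_norm.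
  apply: ler_wsqrtr; lra.
have -> : a * J * ((P + Num.sqrt (P ^+ 2 - c)) / (2 * a * J)) = (P + Num.sqrt (P ^+ 2 - c)) / 2.
  by field; apply/andP; split; apply/lt0r_neq0 => //; rewrite gt_eqF.
lra.
Qed.


Lemma st_bound (n k a s t : R) : 2 <= n -> 1 < k -> 
  (n - 1 + k) * s <= n * a + (k - 1) * t ->
  (1 + (n - 1) * k) * t <= n * a + (n - 1) * (k - 1) * s ->
  s <= a /\ t <= a.
Proof.
move=> n2 k1 h1 h2.
have c1 : 0 <= 1 + (n - 1) * k by nra.
have c2 : 0 <= k - 1 by lra.
have c3 : 0 <= n - 1 + k by lra.
have c4 : 0 <= (n - 1) * (k - 1) by nra.
have e1 := ler_wpM2l c1 h1; have e2 := ler_wpM2l c2 h2.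
have e3 := ler_wpM2l c4 h1; have e4 := ler_wpM2l c3 h2.
have p : 0 < k * n ^+ 2 by nra.
split.
- have : (k * n ^+ 2) * s <= (k * n ^+ 2) * a by nra.
  by rewrite ler_pM2l.
- have : (k * n ^+ 2) * t <= (k * n ^+ 2) * a by nra.
  by rewrite ler_pM2l.
Qed.

Lemma final_alg (n k A I1 I2 J1 J2 E X Y : R) :
  2 <= n -> 1 < k -> 0 < X -> 0 < Y -> 0 < J1 -> 0 < J2 -> 0 <= A -> 0 <= E ->
  (n - 1 + k) * J1 * X <= n * I1 + (k - 1) * Y * E ->
  ((n - 1)^-1 + k) * J2 * Y <= n / (n - 1) * I2 + (k - 1) * X * E ->
  I1 <= Num.sqrt A * Num.sqrt J1 -> I2 <= Num.sqrt A * Num.sqrt J2 ->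
  E <= Num.sqrt J1 * Num.sqrt J2 -> A <= I1 -> A <= I2 ->
  [/\ X * I1 <= A, X <= 1, Y * I2 <= A & Y <= 1].
Proof.
move=> n2 k1 X0 Y0 J10 J20 A0 E0 h1 h2 c1 c2 c3 a1 a2.
set a := Num.sqrt A in c1 c2; set j1 := Num.sqrt J1 in c1 c3; set j2 := Num.sqrt J2 in c2 c3.
have ap : 0 <= a by rewrite sqrtr_ge0.
have j1p : 0 < j1 by rewrite sqrtr_gt0.
have j2p : 0 < j2 by rewrite sqrtr_gt0.
have AE : A = a ^+ 2 by rewrite sqr_sqrtr.
have J1E : J1 = j1 ^+ 2 by rewrite sqr_sqrtr // ltW.
have J2E : J2 = j2 ^+ 2 by rewrite sqr_sqrtr // ltW.
have h2' : (1 + (n - 1) * k) * J2 * Y <= n * I2 + (n - 1) * (k - 1) * X * E.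
  have n1 : 0 < n - 1 by lra.
  have := ler_wpM2l (ltW n1) h2.
  have -> : (n - 1) * (((n - 1)^-1 + k) * J2 * Y) = (1 + (n - 1) * k) * J2 * Y.
    by field; rewrite gt_eqF.
  have -> : (n - 1) * (n / (n - 1) * I2 + (k - 1) * X * E) = n * I2 + (n - 1) * (k - 1) * X * E.
    by field; rewrite gt_eqF.
  by [].
have hs1 : (n - 1 + k) * (j1 * X) <= n * a + (k - 1) * (j2 * Y).
  have : j1 * ((n - 1 + k) * (j1 * X)) <= j1 * (n * a + (k - 1) * (j2 * Y)).
    rewrite J1E in h1.
    have : (k - 1) * Y * E <= (k - 1) * Y * (j1 * j2) by apply: ler_wpM2l => //; nra.
    nra.
  by rewrite ler_pM2l.
have hs2 : (1 + (n - 1) * k) * (j2 * Y) <= n * a + (n - 1) * (k - 1) * (j1 * X).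
  have : j2 * ((1 + (n - 1) * k) * (j2 * Y)) <= j2 * (n * a + (n - 1) * (k - 1) * (j1 * X)).
    rewrite J2E in h2'.
    have : (n - 1) * (k - 1) * X * E <= (n - 1) * (k - 1) * X * (j1 * j2).
      by apply: ler_wpM2l => //; apply: mulr_ge0; [nra | exact: ltW].
    nra.
  by rewrite ler_pM2l.
have [s1 s2] := @st_bound n k a (j1 * X) (j2 * Y) n2 k1 hs1 hs2.
have apos : 0 < a.
  rewrite lt_def ap andbT; apply/negP => /eqP a0.
  rewrite a0 in s1; nra.
have XI : X * I1 <= A.
  have h := ler_wpM2l ap s1.
  have : X * I1 <= X * (a * j1) by rewrite ler_pM2l.
  have -> : X * (a * j1) = a * (j1 * X) by ring.
  rewrite AE expr2; lra.
have YI : Y * I2 <= A.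
  have h := ler_wpM2l ap s2.
  have : Y * I2 <= Y * (a * j2) by rewrite ler_pM2l.
  have -> : Y * (a * j2) = a * (j2 * Y) by ring.
  rewrite AE expr2; lra.
have Ap : 0 < A by rewrite AE exprn_gt0.
split => //.
- have : X * A <= 1 * A by rewrite mul1r; apply: le_trans XI; rewrite ler_pM2l.
  by rewrite ler_pM2r.
- have : Y * A <= 1 * A by rewrite mul1r; apply: le_trans YI; rewrite ler_pM2l.
  by rewrite ler_pM2r.
Qed.


Lemma le_1sq (y : R) : y <= 1 + y ^+ 2.
Proof. have := sqr_ge0 (y - 1). rewrite !expr2. nra. Qed.

Lemma le_prodsq (y z : R) : 0 < y -> 0 < z -> y * z <= y ^+ 2 + z ^+ 2.
Proof. have := sqr_ge0 (y - z). rewrite !expr2. nra. Qed.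

Lemma norm_le_1sq (y : R) : `|y| <= `|1 + y ^+ 2|.
Proof.
rewrite [X in _ <= X]ger0_norm; last by have := sqr_ge0 y; lra.
by have := le_1sq `|y|; rewrite real_normK // num_real.
Qed.

End A.

Section B.
Variable R : realType.
Local Notation mT := (mT R).
Notation mu := (@leb2 R).
Variable D : set mT.
Hypothesis mD : measurable D.
Hypothesis Dfin : (mu D < +oo)%E.

Lemma int_of_nz (f : mT -> R) : measurable_fun D f -> (forall x, D x -> 0 <= f x) ->
  Rintegral mu D f != 0 -> mu.-integrable D (EFin \o f).
Proof.
move=> mf f0 nz; apply/integrableP; split; first exact/measurable_EFinP.
rewrite (eq_integral (fun x => (f x)%:E)); last first.
  by move=> x; rewrite inE => Dx /=; rewrite ger0_norm // f0.
move: nz; rewrite /Rintegral.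
have : (0 <= \int[mu]_(x in D) (f x)%:E)%E by apply: integral_ge0 => x Dx; rewrite lee_fin f0.
by case: (\int[mu]_(x in D) (f x)%:E)%E => [r _ _| |]; rewrite ?ltry //= eqxx.
Qed.

Lemma int_cst (k : R) : mu.-integrable D (EFin \o cst k).
Proof.
apply/integrableP; split; first exact/measurable_EFinP/measurable_cst.
rewrite (eq_integral (fun _ => (`|k|)%:E)) // integral_cst //=.
by rewrite lte_mul_pinfty.
Qed.

Lemma int_dom (f g : mT -> R) : measurable_fun D f -> mu.-integrable D (EFin \o g) ->
  (forall x, D x -> `|f x| <= `|g x|) -> mu.-integrable D (EFin \o f).
Proof.
move=> mf ig h; apply: le_integrable ig => //; first exact/measurable_EFinP.
Qed.

Lemma int_add (f g : mT -> R) : mu.-integrable D (EFin \o f) -> mu.-integrable D (EFin \o g) ->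
  mu.-integrable D (EFin \o (fun x => f x + g x)).
Proof.
move=> i1 i2; apply: eq_integrable mD _ _ _ (integrableD mD i1 i2) => x _ /=; by rewrite EFinD.
Qed.

Lemma int_scale (f : mT -> R) k : mu.-integrable D (EFin \o f) ->
  mu.-integrable D (EFin \o (fun x => k * f x)).
Proof.
move=> i1; apply: eq_integrable mD _ _ _ (integrableZl mD k i1) => x _ /=; by rewrite EFinM.
Qed.

Lemma quad (g h : mT -> R) (m : R) :
  mu.-integrable D (EFin \o (fun x => g x ^+ 2)) ->
  mu.-integrable D (EFin \o (fun x => g x * h x)) ->
  mu.-integrable D (EFin \o (fun x => h x ^+ 2)) ->
  0 <= Rintegral mu D (fun x => g x ^+ 2) - 2 * m * Rintegral mu D (fun x => g x * h x)
       + m ^+ 2 * Rintegral mu D (fun x => h x ^+ 2).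
Proof.
move=> i1 i2 i3.
have ia := int_scale _ (- (2 * m)) i2.
have ib := int_scale _ (m ^+ 2) i3.
have i12 := int_add _ _ i1 ia.
have H : 0 <= Rintegral mu D (fun x => (g x ^+ 2 + - (2 * m) * (g x * h x)) + m ^+ 2 * h x ^+ 2).
  apply: Rintegral_ge0 => x _.
  by have := sqr_ge0 (g x - m * h x); congr (0 <= _); ring.
move: H.
rewrite (RintegralD mD i12 ib) (RintegralD mD i1 ia) (RintegralZl _ mD i2) (RintegralZl _ mD i3).
by rewrite mulNr.  
Qed.

End B.

Theorem lemma2 (R : realType) (N : nat) (kappa lambda : R) (om1 om2 : pt R)
    (n1 n2 : nat) (p1 : 'I_n1 -> pt R) (p2 : 'I_n2 -> pt R)
    (u10 u20 w1 w2 : pt R -> R) (c1 c2 : R) :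
  (2 <= N)%N -> 1 < kappa -> 0 < lambda ->
  lattice_basis om1 om2 ->
  (forall s, fdom om1 om2 (p1 s)) -> (forall s, fdom om1 om2 (p2 s)) ->
  is_u0 om1 om2 p1 u10 -> is_u0 om1 om2 p2 u20 ->
  in_A N kappa lambda om1 om2 n1 n2 u10 u20 w1 w2 ->
  is_c N kappa lambda om1 om2 n1 n2 u10 u20 w1 w2 c1 c2 ->
  [/\ expR c1 * I1 om1 om2 u10 w1 <= area om1 om2, expR c1 <= 1,
      expR c2 * I2 om1 om2 u20 w2 <= area om1 om2 & expR c2 <= 1].
Proof.
move=> N2 k1 l0 hb.
have Nge : (2:R) <= N%:R by rewrite (ler_nat R 2 N).
have Nm1 : 0 < N%:R - 1 :> R by lra.
have kp : 0 < kappa by lra.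
have km1 : 0 <= kappa - 1 by lra.
have c1p : 0 <= 1 + (N%:R - 1) * kappa :> R by apply: addr_ge0 => //; apply: mulr_ge0; exact: ltW.
have c2p : 0 < N%:R - 1 + kappa :> R by lra.
move=> _ _ [_ [mu10 [iu10 [zu10 _]]]] [_ [mu20 [iu20 [zu20 _]]]].
move=> [[[[_ [mw1 iw1]] _] zw1] [[[[_ [mw2 iw2]] _] zw2] _]] [hX hY].
pose D : set (mT R) := fdom om1 om2.
have mD : measurable D := @fdom_measL R om1 om2 hb.
have Dfin : (@leb2 R D < +oo)%E := @fdom_fin R om1 om2 hb.
pose g1 := fun x : mT R => expR (u10 x + w1 x).
pose g2 := fun x : mT R => expR (u20 x + w2 x).
have mg1 : measurable_fun D g1.
  apply: measurableT_comp => //; apply: measurable_funD; exact: mconv.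
have mg2 : measurable_fun D g2.
  apply: measurableT_comp => //; apply: measurable_funD; exact: mconv.
have eI1 : I1 om1 om2 u10 w1 = Rintegral (@leb2 R) D g1 by [].
have eI2 : I2 om1 om2 u20 w2 = Rintegral (@leb2 R) D g2 by [].
have eJ1 : J1 om1 om2 u10 w1 = Rintegral (@leb2 R) D (fun x => g1 x ^+ 2).
  by apply: eq_Rintegral => x _; rewrite /g1 expr2 -expRD; congr expR; ring.
have eJ2 : J2 om1 om2 u20 w2 = Rintegral (@leb2 R) D (fun x => g2 x ^+ 2).
  by apply: eq_Rintegral => x _; rewrite /g2 expr2 -expRD; congr expR; ring.
have eE : E12 om1 om2 u10 u20 w1 w2 = Rintegral (@leb2 R) D (fun x => g1 x * g2 x).
  by apply: eq_Rintegral => x _; rewrite /g1 /g2 -expRD; congr expR; ring.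
rewrite /f1 /P1 eI1 eJ1 eE in hX.
rewrite /f2 /P2 eI2 eJ2 eE in hY.
rewrite /area eI1 eI2.
set A := fine (@leb2 R (fdom om1 om2)).
set vI1 := Rintegral (@leb2 R) D g1 in hX *.
set vI2 := Rintegral (@leb2 R) D g2 in hY *.
set vJ1 := Rintegral (@leb2 R) D (fun x => g1 x ^+ 2) in hX.
set vJ2 := Rintegral (@leb2 R) D (fun x => g2 x ^+ 2) in hY.
set vE := Rintegral (@leb2 R) D (fun x => g1 x * g2 x) in hX hY.
have J1nz : vJ1 != 0.
  apply/eqP => J0; move: hX; rewrite J0 !mulr0 invr0 mulr0 => /eqP.
  by rewrite gt_eqF // expR_gt0.
have J2nz : vJ2 != 0.
  apply/eqP => J0; move: hY; rewrite J0 !mulr0 invr0 mulr0 => /eqP.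
  by rewrite gt_eqF // expR_gt0.
have g1p : forall x, 0 < g1 x by move=> x; exact: expR_gt0.
have g2p : forall x, 0 < g2 x by move=> x; exact: expR_gt0.
have iJ1 : (@leb2 R).-integrable D (EFin \o (fun x => g1 x ^+ 2)).
  apply: (@int_of_nz R D) => //; first exact: measurable_funX.
  by move=> x _; rewrite sqr_ge0.
have iJ2 : (@leb2 R).-integrable D (EFin \o (fun x => g2 x ^+ 2)).
  apply: (@int_of_nz R D) => //; first exact: measurable_funX.
  by move=> x _; rewrite sqr_ge0.
have i1 : (@leb2 R).-integrable D (EFin \o cst 1) := @int_cst R D mD Dfin 1.
have iI1 : (@leb2 R).-integrable D (EFin \o g1).
  apply: (@int_dom R D mD g1 _ mg1 (@int_add R D mD _ _ i1 iJ1)) => x _.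
  by rewrite /=; exact: norm_le_1sq.
have iI2 : (@leb2 R).-integrable D (EFin \o g2).
  apply: (@int_dom R D mD g2 _ mg2 (@int_add R D mD _ _ i1 iJ2)) => x _.
  by rewrite /=; exact: norm_le_1sq.
have iE : (@leb2 R).-integrable D (EFin \o (fun x => g1 x * g2 x)).
  apply: (@int_dom R D mD (fun x => g1 x * g2 x) _ _ (@int_add R D mD _ _ iJ1 iJ2)) => [|x _].
    exact: measurable_funM.
  have := g1p x; have := g2p x => h1 h2.
  have hp := @le_prodsq _ _ _ h2 h1; have s1 := sqr_ge0 (g1 x); have s2 := sqr_ge0 (g2 x).
  by rewrite /= (ger0_norm (mulr_ge0 (ltW h2) (ltW h1))) (ger0_norm (addr_ge0 s1 s2)).
have i1' : (@leb2 R).-integrable D (EFin \o (fun x : mT R => (1:R) ^+ 2)).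
  by apply: eq_integrable mD _ _ _ i1 => x _ /=; rewrite expr1n.
have ig1' : (@leb2 R).-integrable D (EFin \o (fun x : mT R => g1 x * 1)).
  by apply: eq_integrable mD _ _ _ iI1 => x _ /=; rewrite mulr1.
have ig2' : (@leb2 R).-integrable D (EFin \o (fun x : mT R => g2 x * 1)).
  by apply: eq_integrable mD _ _ _ iI2 => x _ /=; rewrite mulr1.
have iE' : (@leb2 R).-integrable D (EFin \o (fun x : mT R => g2 x * g1 x)).
  by apply: eq_integrable mD _ _ _ iE => x _ /=; rewrite mulrC.
have hA : Rintegral (@leb2 R) D (fun x : mT R => (1:R) ^+ 2) = A.
  by rewrite (@eq_Rintegral _ _ _ _ D (fun _ => 1)) ?Rintegral_cst ?mul1r // => x _; rewrite expr1n.
have hg1 : Rintegral (@leb2 R) D (fun x : mT R => g1 x * 1) = vI1.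
  by apply: eq_Rintegral => x _; rewrite mulr1.
have hg2 : Rintegral (@leb2 R) D (fun x : mT R => g2 x * 1) = vI2.
  by apply: eq_Rintegral => x _; rewrite mulr1.
have hE' : Rintegral (@leb2 R) D (fun x : mT R => g2 x * g1 x) = vE.
  by apply: eq_Rintegral => x _; rewrite mulrC.
have A0 : 0 <= A by rewrite /A fine_ge0 // measure_ge0.
have I1p : 0 <= vI1 by apply: Rintegral_ge0 => x _; apply: ltW; apply: g1p.
have I2p : 0 <= vI2 by apply: Rintegral_ge0 => x _; apply: ltW; apply: g2p.
have Ep : 0 <= vE by apply: Rintegral_ge0 => x _; apply: mulr_ge0; apply: ltW; [apply: g1p|apply: g2p].
have J1p : 0 < vJ1.
  by rewrite lt_def J1nz /=; apply: Rintegral_ge0 => x _; exact: sqr_ge0.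
have J2p : 0 < vJ2.
  by rewrite lt_def J2nz /=; apply: Rintegral_ge0 => x _; exact: sqr_ge0.
have cs1 : vI1 <= Num.sqrt A * Num.sqrt vJ1.
  apply: (@cs_lemma R A vI1 vJ1 A0 I1p J1p) => m; have := @quad R D mD g1 (fun _ => 1) m iJ1 ig1' i1'.
  by rewrite hA hg1.
have cs2 : vI2 <= Num.sqrt A * Num.sqrt vJ2.
  apply: (@cs_lemma R A vI2 vJ2 A0 I2p J2p) => m; have := @quad R D mD g2 (fun _ => 1) m iJ2 ig2' i1'.
  by rewrite hA hg2.
have cs3 : vE <= Num.sqrt vJ1 * Num.sqrt vJ2.
  apply: (@cs_lemma R vJ1 vE vJ2 (ltW J1p) Ep J2p).
  by move=> m; have := @quad R D mD g2 g1 m iJ2 iE' iJ1; rewrite hE'.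
have pip : 0 <= (pi : R) := pi_ge0 R.
have Xp : 0 < expR c1 := expR_gt0 c1.
have Yp : 0 < expR c2 := expR_gt0 c2.
have b1p : 0 <= b1 N kappa n1 n2.
  rewrite /b1; apply: divr_ge0; last exact: ltW.
  apply: mulr_ge0; first by apply: mulr_ge0.
  by apply: addr_ge0; apply: mulr_ge0.
have b2p : 0 <= b2 N kappa n1 n2.
  rewrite /b2; apply: divr_ge0; last by apply: mulr_ge0; exact: ltW.
  apply: mulr_ge0; first by apply: mulr_ge0.
  apply: addr_ge0; apply: mulr_ge0 => //; [apply: mulr_ge0 => //; exact: ltW | exact: ltW].
have h1 : (N%:R - 1 + kappa) * vJ1 * expR c1 <= N%:R * vI1 + (kappa - 1) * expR c2 * vE.
  apply: (@quad_root R _ _ _ _ _ c2p J1p _ _ hX).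
  - apply: addr_ge0; first by apply: mulr_ge0.
    by apply: mulr_ge0 => //; apply: mulr_ge0 => //; exact: ltW.
  - apply: mulr_ge0; last exact: ltW.
    apply: divr_ge0; last exact: ltW.
    apply: mulr_ge0 => //; apply: mulr_ge0 => //; exact: ltW.
have h2 : ((N%:R - 1)^-1 + kappa) * vJ2 * expR c2 <= N%:R / (N%:R - 1) * vI2 + (kappa - 1) * expR c1 * vE.
  have a2p : 0 < (N%:R - 1)^-1 + kappa by apply: addr_gt0 => //; rewrite invr_gt0.
  apply: (@quad_root R _ _ _ _ _ a2p J2p _ _ hY).
  - apply: addr_ge0.
      by apply: mulr_ge0 => //; apply: divr_ge0 => //; exact: ltW.
    by apply: mulr_ge0 => //; apply: mulr_ge0 => //; exact: ltW.
  - apply: mulr_ge0; last exact: ltW.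
    apply: divr_ge0; last by apply: mulr_ge0; exact: ltW.
    by apply: mulr_ge0 => //; apply: mulr_ge0.
have iw1' : (@leb2 R).-integrable D (EFin \o w1) :=
  @int_dom R D mD w1 _ (@mconv R _ _ mw1) (@int_add R D mD _ _ i1 iw1) (fun x _ => @norm_le_1sq R (w1 x)).
have iw2' : (@leb2 R).-integrable D (EFin \o w2) :=
  @int_dom R D mD w2 _ (@mconv R _ _ mw2) (@int_add R D mD _ _ i1 iw2) (fun x _ => @norm_le_1sq R (w2 x)).
have jen1 : A <= vI1.
  have isum := @int_add R D mD _ _ i1 (@int_add R D mD _ _ iu10 iw1').
  have := @le_Rintegral _ _ _ (@leb2 R) D _ g1 mD isum iI1 (fun x _ => expR_ge1Dx _).
  rewrite (RintegralD mD i1 (@int_add R D mD _ _ iu10 iw1')) (RintegralD mD iu10 iw1').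
  rewrite Rintegral_cst // mul1r.
  by move: zu10 zw1; rewrite /intO => -> ->; rewrite !addr0.
have jen2 : A <= vI2.
  have isum := @int_add R D mD _ _ i1 (@int_add R D mD _ _ iu20 iw2').
  have := @le_Rintegral _ _ _ (@leb2 R) D _ g2 mD isum iI2 (fun x _ => expR_ge1Dx _).
  rewrite (RintegralD mD i1 (@int_add R D mD _ _ iu20 iw2')) (RintegralD mD iu20 iw2').
  rewrite Rintegral_cst // mul1r.
  by move: zu20 zw2; rewrite /intO => -> ->; rewrite !addr0.
exact: (@final_alg R N%:R kappa A vI1 vI2 vJ1 vJ2 vE (expR c1) (expR c2) Nge k1 Xp Yp J1p J2p A0 Ep h1 h2 cs1 cs2 cs3 jen1 jen2).
Qed.
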